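(* Let $\mathfrak g=\mathfrak g(\mathfrak l,V,\mathfrak z,\beta)$ be admissible. Then (a) every abelian ideal of $\mathfrak g$ is central, and (b) every ideal of $\mathfrak g$ contained in $V$ is trivial.
   Context: $\mathfrak g$ (finite-dimensional real) is admissible if it contains a pointed (no affine lines), generating (spanning), closed convex subset invariant under $\operatorname{Inn}(\mathfrak g)=\langle e^{\operatorname{ad}\mathfrak g}\rangle$. $\mathfrak g(\mathfrak l,V,\mathfrak z,\beta)$ denotes $\mathfrak z\oplus V\oplus\mathfrak l$ ($\mathfrak l$ reductive, $V$ an $\mathfrak l$-module, $\beta:V\times V\to\mathfrak z$ skew-symmetric and $\mathfrak l$-invariant) with bracket $[(z,v,x),(z',v',x')]=(\beta(v,v'),x.v'-x'.v,[x,x'])$; for an admissible Lie algebra in this form, $\mathfrak z=\mathfrak z(\mathfrak g)$ is the center. *)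

(* Defs.v *)
From HB Require Import structures.
From mathcomp Require Import all_boot all_order all_algebra.
From mathcomp Require Import all_classical all_reals all_analysis.
Set Implicit Arguments. Unset Strict Implicit. Unset Printing Implicit Defensive.
Import Order.TTheory GRing.Theory Num.Theory.
Import numFieldTopology.Exports numFieldNormedType.Exports.
Local Open Scope classical_set_scope.
Local Open Scope ring_scope.

Section LieDefs.
Variable R : realType.

Definition bilinear_map (U V W : lmodType R) (b : U -> V -> W) : Prop :=
  (forall (a : R) (x y : U) (v : V), b (a *: x + y) v = a *: b x v + b y v) /\
  (forall (a : R) (x : U) (v w : V), b x (a *: v + w) = a *: b x v + b x w).

Definition lie_bracket (L : lmodType R) (br : L -> L -> L) : Prop :=
  [/\ bilinear_map br,
      (forall x, br x x = 0) &
      (forall x y z, br x (br y z) + br y (br z x) + br z (br x y) = 0)].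

Definition subspace (L : lmodType R) (I : set L) : Prop :=
  I 0 /\ (forall (a : R) u v, I u -> I v -> I (a *: u + v)).

Definition lie_ideal (L : lmodType R) (br : L -> L -> L) (I : set L) : Prop :=
  subspace I /\ (forall x u, I u -> I (br x u)).

Definition abelian_ideal (L : lmodType R) (br : L -> L -> L) (I : set L) : Prop :=
  lie_ideal br I /\ (forall u v, I u -> I v -> br u v = 0).

Definition lie_center (L : lmodType R) (br : L -> L -> L) : set L :=
  [set u | forall x, br x u = 0].

Definition central_set (L : lmodType R) (br : L -> L -> L) (I : set L) : Prop :=
  I `<=` lie_center br.

(** Reductive: the adjoint representation is semisimple, i.e. every ideal
    has a complementary ideal. *)
Definition reductive (L : lmodType R) (br : L -> L -> L) : Prop :=
  lie_bracket br /\
  forall I, lie_ideal br I ->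
    exists J, lie_ideal br J /\
      (forall x, exists u v, I u /\ J v /\ x = u + v) /\
      (forall x, I x -> J x -> x = 0).

Definition in_span (L : lmodType R) (C : set L) (w : L) : Prop :=
  exists (n : nat) (c : 'I_n -> R) (u : 'I_n -> L),
    (forall i, C (u i)) /\ w = \sum_(i < n) c i *: u i.

Definition convex_set (L : lmodType R) (C : set L) : Prop :=
  forall u v (t : R), C u -> C v -> 0 <= t -> t <= 1 -> C (t *: u + (1 - t) *: v).

Definition pointed_set (L : lmodType R) (C : set L) : Prop :=
  ~ exists (a d : L), d != 0 /\ forall t : R, C (a + t *: d).

Definition generating_set (L : lmodType R) (C : set L) : Prop :=
  forall w, in_span C w.

Definition expmap (n : nat) (f : 'rV[R]_n -> 'rV[R]_n) (w : 'rV[R]_n) : 'rV[R]_n :=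
  lim ((fun N : nat => \sum_(j < N) (j`!%:R)^-1 *: iter j f w) @ \oo).

(** Admissibility of the Lie algebra ('rV[R]_n, br): there is a pointed,
    generating, closed convex subset invariant under Inn = <e^{ad g}>;
    invariance under the group is invariance under its generators e^{ad x}. *)
Definition admissible (n : nat) (br : 'rV[R]_n -> 'rV[R]_n -> 'rV[R]_n) : Prop :=
  exists C : set 'rV[R]_n,
    [/\ pointed_set C, generating_set C, closed C, convex_set C &
        forall x w, C w -> C (expmap (br x) w)].

(** The Lie algebra g(l,V,z,beta) = z (+) V (+) l realized on 'rV_(p + m + k):
    an element is row_mx (row_mx z v) x. *)
Definition gz (p m k : nat) (w : 'rV[R]_(p + m + k)) : 'rV[R]_p := lsubmx (lsubmx w).
Definition gV (p m k : nat) (w : 'rV[R]_(p + m + k)) : 'rV[R]_m := rsubmx (lsubmx w).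
Definition gl (p m k : nat) (w : 'rV[R]_(p + m + k)) : 'rV[R]_k := rsubmx w.
Definition gmk (p m k : nat) (z : 'rV[R]_p) (v : 'rV[R]_m) (x : 'rV[R]_k)
  : 'rV[R]_(p + m + k) := row_mx (row_mx z v) x.

Definition gbracket (p m k : nat)
  (brl : 'rV[R]_k -> 'rV[R]_k -> 'rV[R]_k)
  (act : 'rV[R]_k -> 'rV[R]_m -> 'rV[R]_m)
  (beta : 'rV[R]_m -> 'rV[R]_m -> 'rV[R]_p)
  (w w' : 'rV[R]_(p + m + k)) : 'rV[R]_(p + m + k) :=
  gmk (beta (gV w) (gV w'))
      (act (gl w) (gV w') - act (gl w') (gV w))
      (brl (gl w) (gl w')).

Definition lie_module (k m : nat) (brl : 'rV[R]_k -> 'rV[R]_k -> 'rV[R]_k)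
  (act : 'rV[R]_k -> 'rV[R]_m -> 'rV[R]_m) : Prop :=
  bilinear_map act /\
  forall x y v, act (brl x y) v = act x (act y v) - act y (act x v).

Definition invariant_skew_form (k m p : nat)
  (act : 'rV[R]_k -> 'rV[R]_m -> 'rV[R]_m)
  (beta : 'rV[R]_m -> 'rV[R]_m -> 'rV[R]_p) : Prop :=
  [/\ bilinear_map beta,
      (forall v v', beta v v' = - beta v' v) &
      (forall x v v', beta (act x v) v' + beta v (act x v') = 0)].

End LieDefs.

(* Main.v *)
Require Import Defs.
From HB Require Import structures.
From mathcomp Require Import all_boot all_order all_algebra.
From mathcomp Require Import all_classical all_reals all_analysis.
Import Order.TTheory GRing.Theory Num.Theory.
Import numFieldTopology.Exports numFieldNormedType.Exports.
Local Open Scope classical_set_scope.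
Local Open Scope ring_scope.

Lemma expmap_nil (R : realType) n (f : 'rV[R]_n -> 'rV[R]_n) w :
  f 0 = 0 -> f (f w) = 0 -> expmap f w = w + f w.
Proof.
move=> f0 ffw; rewrite /expmap; apply: lim_near_cst.
  exact: norm_hausdorff.
exists 2%N => // N /= HN.
have it0 : forall j, iter j f 0 = 0 by elim=> //= j ->.
case: N HN => [|[|N]] // _.
rewrite big_ord_recl big_ord_recl /= big1 ?addr0.
  by rewrite /= invr1 !scale1r.
move=> i _; rewrite add0n -!iterS !iterSr ffw.
by rewrite it0 scaler0.

Qed.

Lemma key (R : realType) n (br : 'rV[R]_n -> 'rV[R]_n -> 'rV[R]_n)
  (Hlin : forall w (a : R) u v, br w (a *: u + v) = a *: br w u + br w v)
  (Hskew : forall u v, br u v = - br v u) :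
  admissible br -> forall I, abelian_ideal br I -> central_set br I.
Proof.
have br0 : forall w, br w 0 = 0.
  by move=> w; have := Hlin w (-1) 0 0; rewrite scaler0 addr0 scaleN1r addNr.
have brZl : forall (a : R) u v, br (a *: u) v = a *: br u v.
  by move=> a u v; rewrite Hskew -[a *: u]addr0 Hlin br0 addr0 -scalerN -Hskew.
have brD : forall w u v, br w (u + v) = br w u + br w v.
  by move=> w u v; have := Hlin w 1 u v; rewrite !scale1r.
have brZ : forall w (a : R) u, br w (a *: u) = a *: br w u.
  by move=> w a u; rewrite -[a *: u]addr0 Hlin br0 addr0.
move=> [C [Hpt Hgen _ _ Hinv]] I [[[I0 Isub] Iid] Iab] w Iw.
have Hneg : forall u, I u -> I (- u).
  by move=> u Iu; rewrite -[- u]addr0 -scaleN1r; apply: Isub.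
have Hc : forall c, C c -> br w c = 0.
  move=> c Cc; apply: contrapT => Hd; apply: Hpt.
  exists c, (br w c); split; first by apply/eqP.
  move=> t.
  have := Hinv (t *: w) c Cc; rewrite expmap_nil ?br0 //.
    by rewrite brZl.
  rewrite !brZl brZ (Iab w) ?scaler0 //; rewrite Hskew; apply: Hneg; exact: Iid.
move=> x /=; rewrite Hskew; apply/eqP; rewrite oppr_eq0; apply/eqP.
have [N [c [u [Cu ->]]]] := Hgen x.
apply: (big_ind (fun y => br w y = 0)) => //.
- by move=> y z Hy Hz; rewrite brD Hy Hz addr0.
- by move=> i _; rewrite brZ Hc ?scaler0.
Qed.

Section G.
Variables (R : realType) (p m k : nat)
  (brl : 'rV[R]_k -> 'rV[R]_k -> 'rV[R]_k)
  (act : 'rV[R]_k -> 'rV[R]_m -> 'rV[R]_m)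
  (beta : 'rV[R]_m -> 'rV[R]_m -> 'rV[R]_p).

Lemma gV_lin (a : R) (u v : 'rV[R]_(p + m + k)) : gV (a *: u + v) = a *: gV u + gV v.
Proof. by rewrite /gV !linearP. Qed.
Lemma gl_lin (a : R) (u v : 'rV[R]_(p + m + k)) : gl (a *: u + v) = a *: gl u + gl v.
Proof. by rewrite /gl !linearP. Qed.
Lemma gmk_lin (a : R) z v x z' v' x' :
  a *: gmk z v x + gmk z' v' x' = gmk (a*:z+z') (a*:v+v') (a*:x+x') :> 'rV[R]_(p+m+k).
Proof. by rewrite /gmk !scale_row_mx !add_row_mx. Qed.
Lemma gmk_opp z v x : - gmk z v x = gmk (-z) (-v) (-x) :> 'rV[R]_(p+m+k).
Proof. by rewrite /gmk !opp_row_mx. Qed.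

Lemma bil_add {U V W : lmodType R} {b : U -> V -> W} : bilinear_map b ->
  (forall x y v, b (x + y) v = b x v + b y v) /\ (forall x v w, b x (v + w) = b x v + b x w).
Proof.
by case=> H1 H2; split=> *; [rewrite -[x in b (x + _)]scale1r H1 scale1r
                            | rewrite -[v in b _ (v + _)]scale1r H2 scale1r].
Qed.

Lemma skew_of {U W : lmodType R} {b : U -> U -> W} : bilinear_map b ->
  (forall x, b x x = 0) -> forall x y, b x y = - b y x.
Proof.
move=> Hb H0 x y; have [A1 A2] := bil_add Hb.
have := H0 (x + y); rewrite A1 !A2 !H0 add0r addr0 => /eqP.
by rewrite addr_eq0 => /eqP.
Qed.

Hypotheses (Hl : lie_bracket brl) (Hm : lie_module brl act)
  (Hb : invariant_skew_form act beta).

Lemma g_skew u v : gbracket brl act beta u v = - gbracket brl act beta v u.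
Proof.
case: Hl => Hbl Hxx _; case: Hb => _ Hbs _.
rewrite /gbracket gmk_opp -Hbs -(skew_of Hbl Hxx) opprB //.
Qed.

Lemma g_lin w (a : R) u v : gbracket brl act beta w (a *: u + v) =
  a *: gbracket brl act beta w u + gbracket brl act beta w v.
Proof.
case: Hl => [[_ Bl2] _ _]; case: Hm => [[A1 A2] _]; case: Hb => [[_ B2] _ _].
rewrite /gbracket gmk_lin gV_lin gl_lin B2 A2 A1 Bl2; congr gmk.
by rewrite scalerBr opprD addrACA.
Qed.
End G.

Theorem lemma2 (R : realType) (p m k : nat)
  (brl : 'rV[R]_k -> 'rV[R]_k -> 'rV[R]_k)
  (act : 'rV[R]_k -> 'rV[R]_m -> 'rV[R]_m)
  (beta : 'rV[R]_m -> 'rV[R]_m -> 'rV[R]_p) :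
  reductive brl ->
  lie_module brl act ->
  invariant_skew_form act beta ->
  admissible (gbracket brl act beta) ->
  (* z = z(g): the center of g is exactly the z-component *)
  (forall w : 'rV[R]_(p + m + k),
      lie_center (gbracket brl act beta) w <-> (gV w = 0 /\ gl w = 0)) ->
  (forall I : set 'rV[R]_(p + m + k),
      abelian_ideal (gbracket brl act beta) I ->
      central_set (gbracket brl act beta) I) /\
  (forall I : set 'rV[R]_(p + m + k),
      lie_ideal (gbracket brl act beta) I ->
      (forall w, I w -> gz w = 0 /\ gl w = 0) ->
      I = [set 0]).
Proof.
move=> [Hl _] Hm Hb Hadm Hcent.
have Ha := @key R (p + m + k) (gbracket brl act beta) (@g_lin R p m k brl act beta Hl Hm Hb) (@g_skew R p m k brl act beta Hl Hb) Hadm.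
split => // I HI HIV.
have act0 : forall v, act 0 v = 0.
  case: Hm => [[A1 _] _] v.
  by have := A1 (-1) 0 0 v; rewrite scaler0 addr0 scaleN1r addNr.
have Hab : abelian_ideal (gbracket brl act beta) I.
  split => // u v Iu Iv.
  have [zu lu] := HIV u Iu; have [zv lv] := HIV v Iv.
  have Iuv := (HI.2 u v Iv).
  have [zuv _] := HIV _ Iuv.
  move: zuv; rewrite /gbracket /gz /gmk row_mxKl row_mxKl => ->.
  rewrite lu lv !act0 subrr.
  case: Hl => _ -> _.
  by rewrite !row_mx0.
apply/seteqP; split => u /=.
  move=> Iu; have /Hcent [vu lu] := Ha I Hab u Iu.
  have [zu _] := HIV u Iu.
  by rewrite -(hsubmxK u) -(hsubmxK (lsubmx u)); move: zu vu lu; rewrite /gz /gV /gl => -> -> ->; rewrite !row_mx0.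
by move=> ->; case: HI => [[]].
Qed.
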